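(* Let $A\in\mathbb R^{m\times n}$, $W\in\mathbb R^{k\times n}$ and $\alpha>0$. For $y\in\mathbb R^m$ let $\hat x(y)\subset\mathbb R^n$ be the set of minimizers of $x\mapsto\|Ax-y\|_2^2+\alpha\|Wx\|_1$. Then the set-valued map $y\mapsto\hat x(y)$ is Hausdorff Lipschitz continuous: there exists $\kappa>0$ such that $$\hat x(\tilde y)\subset\hat x(y)+\kappa\|y-\tilde y\|_2\,B_1(0)\qquad\text{for all }y,\tilde y\in\mathbb R^m.$$
   Context: $B_1(0)$ denotes the closed Euclidean unit ball in $\mathbb R^n$; $\|\cdot\|_1$ and $\|\cdot\|_2$ denote the $\ell^1$- and Euclidean norms. *)

(* Defs.v *)
From HB Require Import structures.
From mathcomp Require Import all_boot all_order all_algebra.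
From mathcomp Require Import reals.
Set Implicit Arguments. Unset Strict Implicit. Unset Printing Implicit Defensive.
Import Order.TTheory GRing.Theory Num.Theory.
Local Open Scope ring_scope.

Definition norm1 (R : realType) (p : nat) (v : 'cV[R]_p) : R :=
  \sum_(i < p) `|v i 0|.

Definition norm2 (R : realType) (p : nat) (v : 'cV[R]_p) : R :=
  Num.sqrt (\sum_(i < p) (v i 0) ^+ 2).

Definition objective (R : realType) (m n k : nat) (A : 'M[R]_(m, n))
  (W : 'M[R]_(k, n)) (alpha : R) (y : 'cV[R]_m) (x : 'cV[R]_n) : R :=
  norm2 (A *m x - y) ^+ 2 + alpha * norm1 (W *m x).

Definition minimizers (R : realType) (m n k : nat) (A : 'M[R]_(m, n))
  (W : 'M[R]_(k, n)) (alpha : R) (y : 'cV[R]_m) (x : 'cV[R]_n) : Prop :=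
  forall z : 'cV[R]_n, objective A W alpha y x <= objective A W alpha y z.

(* Main.v *)
Require Import Defs.
From HB Require Import structures.
From mathcomp Require Import all_boot all_order all_algebra.
From mathcomp Require Import reals.
From mathcomp Require Import classical_sets ring lra.
Import Order.TTheory GRing.Theory Num.Theory.
Local Open Scope ring_scope.

Set Implicit Arguments. Unset Strict Implicit. Unset Printing Implicit Defensive.

Section Hoff.
Variable R : realType.
Local Notation vec n := 'cV[R]_n.

Definition dot n (a x : vec n) : R := \sum_i a i 0 * x i 0.

Lemma dotDl n (a b x : vec n) : dot (a + b) x = dot a x + dot b x.
Proof. rewrite /dot -big_split /=; apply: eq_bigr => i _; by rewrite mxE mulrDl. Qed.
Lemma dotZl n r (a x : vec n) : dot (r *: a) x = r * dot a x.
Proof. rewrite /dot mulr_sumr; apply: eq_bigr => i _; by rewrite mxE mulrA. Qed.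
Lemma dotBr n (a x y : vec n) : dot a (x - y) = dot a x - dot a y.
Proof. rewrite /dot -sumrB; apply: eq_bigr => i _; by rewrite !mxE mulrBr. Qed.

Lemma dot_abs_le n (a v : vec n) B : (forall j, `|v j 0| <= B) ->
  `|dot a v| <= (\sum_i `|a i 0|) * B.
Proof.
move=> HB; rewrite /dot mulr_suml; apply: (le_trans (ler_norm_sum _ _ _)).
apply: ler_sum => i _; rewrite normrM; apply: ler_wpM2l => //.
Qed.

Definition hd n (a : vec n.+1) : R := a ord0 0.
Definition tl n (a : vec n.+1) : vec n := \col_i a (lift ord0 i) 0.
Definition vcons n (t : R) (x : vec n) : vec n.+1 :=
  \col_i (match unlift ord0 i with Some j => x j 0 | None => t end).

Lemma dot_split n (a x : vec n.+1) : dot a x = hd a * hd x + dot (tl a) (tl x).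
Proof. rewrite /dot big_ord_recl; congr (_ + _); apply: eq_bigr => i _; by rewrite !mxE. Qed.
Lemma hd_vcons n t (x : vec n) : hd (vcons t x) = t.
Proof. by rewrite /hd mxE unlift_none. Qed.
Lemma tl_vcons n t (x : vec n) : tl (vcons t x) = x.
Proof. apply/matrixP => i j; rewrite !mxE liftK; by rewrite (ord1 j). Qed.

Lemma tl_norm_le n (a : vec n.+1) : \sum_i `|tl a i 0| <= \sum_i `|a i 0|.
Proof.
rewrite [X in _ <= X]big_ord_recl; apply: ler_wpDl => //.
by apply: ler_sum => i _; rewrite mxE.
Qed.

Lemma sum_mem_le (T : eqType) (s : seq T) (F : T -> R) x :
  x \in s -> (forall y, 0 <= F y) -> F x <= \sum_(y <- s) F y.
Proof.
move=> xs F0; rewrite (big_rem _ xs) /= lerDl; exact: sumr_ge0.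
Qed.

Lemma foldr_min_le (t : R) s x : x \in s -> Order.min (foldr Order.min t s) x = foldr Order.min t s.
Proof. Abort.

Lemma fmin_le (t : R) s x : x \in s -> foldr Order.min t s <= x.
Proof.
elim: s => //= y s IH; rewrite inE => /orP [/eqP ->|/IH h].
  by rewrite ge_min lexx.
by rewrite ge_min h orbT.
Qed.
Lemma fmin_le0 (t : R) s : foldr Order.min t s <= t.
Proof. elim: s => //= y s IH; by rewrite ge_min IH orbT. Qed.
Lemma fmin_ge (t B : R) s : B <= t -> (forall x, x \in s -> B <= x) ->
  B <= foldr Order.min t s.
Proof.
move=> Bt; elim: s => //= y s IH H; rewrite le_min H ?inE ?eqxx // IH //.
by move=> x xs; apply: H; rewrite inE xs orbT.
Qed.
Lemma fmax_ge (t : R) s x : x \in s -> x <= foldr Order.max t s.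
Proof.
elim: s => //= y s IH; rewrite inE => /orP [/eqP ->|/IH h].
  by rewrite le_max lexx.
by rewrite le_max h orbT.
Qed.
Lemma fmax_ge0 (t : R) s : t <= foldr Order.max t s.
Proof. elim: s => //= y s IH; by rewrite le_max IH orbT. Qed.
Lemma fmax_le (t B : R) s : t <= B -> (forall x, x \in s -> x <= B) ->
  foldr Order.max t s <= B.
Proof.
move=> Bt; elim: s => //= y s IH H; rewrite ge_max H ?inE ?eqxx // IH //.
by move=> x xs; apply: H; rewrite inE xs orbT.
Qed.

Definition sat n (cs : seq (vec n * R)) (x : vec n) (e : R) :=
  forall c, c \in cs -> dot c.1 x <= c.2 + e.

Definition comb n (a b : vec n.+1) : vec n :=
  (hd a)^-1 *: tl a + (- hd b)^-1 *: tl b.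
Definition fm_as n (as_ : seq (vec n.+1)) : seq (vec n) :=
  [seq tl a | a <- as_ & hd a == 0] ++
  [seq comb a b | a <- [seq a <- as_ | 0 < hd a], b <- [seq b <- as_ | hd b < 0]].
Definition fm_cs n (cs : seq (vec n.+1 * R)) : seq (vec n * R) :=
  [seq (tl c.1, c.2) | c <- cs & hd c.1 == 0] ++
  [seq (comb c.1 d.1, c.2 / hd c.1 + d.2 / (- hd d.1)) |
     c <- [seq c <- cs | 0 < hd c.1], d <- [seq d <- cs | hd d.1 < 0]].

Lemma fm_csP n (cs : seq (vec n.+1 * R)) c' : c' \in fm_cs cs ->
  (exists c, [/\ c \in cs, hd c.1 = 0 & c' = (tl c.1, c.2)]) \/
  (exists c d, [/\ c \in cs, d \in cs, 0 < hd c.1, hd d.1 < 0 &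
     c' = (comb c.1 d.1, c.2 / hd c.1 + d.2 / (- hd d.1))]).
Proof.
rewrite mem_cat => /orP [/mapP [c]|/allpairsP [[c d] [/= hc hd' ->]]].
  rewrite mem_filter => /andP [/eqP h0 hc] ->; left; by exists c.
move: hc hd'; rewrite !mem_filter => /andP [hp hc] /andP [hn hd'].
right; by exists c, d.
Qed.

Lemma fm_mem n (as_ : seq (vec n.+1)) cs : (forall c, c \in cs -> c.1 \in as_) ->
  forall c', c' \in fm_cs cs -> c'.1 \in fm_as as_.
Proof.
move=> H c' /fm_csP [[c [hc h0 ->]]|[c [d [hc hd' hp hn ->]]]]; rewrite mem_cat.
  by rewrite /= map_f // mem_filter h0 eqxx H.
apply/orP; right; apply/allpairsP; exists (c.1, d.1) => /=.
by rewrite !mem_filter hp hn !H.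
Qed.

Lemma fm_mem0 n (cs : seq (vec n.+1 * R)) c : c \in cs -> hd c.1 = 0 ->
  (tl c.1, c.2) \in fm_cs cs.
Proof. by move=> hc h0; rewrite mem_cat map_f // mem_filter h0 eqxx hc. Qed.

Lemma fm_mem1 n (cs : seq (vec n.+1 * R)) c d : c \in cs -> d \in cs ->
  0 < hd c.1 -> hd d.1 < 0 ->
  (comb c.1 d.1, c.2 / hd c.1 + d.2 / (- hd d.1)) \in fm_cs cs.
Proof.
move=> hc hd' hp hn; rewrite mem_cat; apply/orP; right.
by apply/allpairsP; exists (c, d) => /=; rewrite !mem_filter hp hn hc hd'.
Qed.

Lemma dot_comb n (a b : vec n.+1) x :
  dot (comb a b) x = (hd a)^-1 * dot (tl a) x + (- hd b)^-1 * dot (tl b) x.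
Proof. by rewrite /comb dotDl !dotZl. Qed.

Lemma fm_sat n (cs : seq (vec n.+1 * R)) x e M : 0 <= e ->
  (forall c, c \in cs -> `|hd c.1|^-1 <= M) ->
  sat cs x e -> sat (fm_cs cs) (tl x) ((2 * M + 1) * e).
Proof.
move=> e0 HM Hs c' /fm_csP [[c [hc h0 ->]]|[c [d [hc hd' hp hn ->]]]] /=.
  have := Hs _ hc; rewrite dot_split h0 mul0r add0r => h.
  have M0 : 0 <= M by apply: le_trans (HM _ hc); rewrite invr_ge0.
  nra.
have := Hs _ hc; have := Hs _ hd'; rewrite !dot_split dot_comb => h2 h1.
have := HM _ hc; have := HM _ hd'.
rewrite (gtr0_norm hp) (ltr0_norm hn) => m2 m1.
set ia := (hd c.1)^-1 in m1 *; set ib := (- hd d.1)^-1 in m2 *.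
have ia1 : ia * hd c.1 = 1 by rewrite mulVf // gt_eqF.
have ib1 : ib * (- hd d.1) = 1 by rewrite mulVf // oppr_eq0 lt_eqF.
have ia0 : 0 < ia by rewrite invr_gt0.
have ib0 : 0 < ib by rewrite invr_gt0 oppr_gt0.
rewrite !(mulrC _ ia) !(mulrC _ ib).
have k1 : hd x + ia * dot (tl c.1) (tl x) <= ia * c.2 + ia * e.
  have := ler_wpM2l (ltW ia0) h1; rewrite !mulrDr mulrA ia1 mul1r.
  by move=> k; exact k.
have ib1' : ib * hd d.1 = -1 by rewrite -ib1 mulrN opprK.
have k2 : - hd x + ib * dot (tl d.1) (tl x) <= ib * d.2 + ib * e.
  have := ler_wpM2l (ltW ib0) h2; rewrite !mulrDr mulrA ib1' mulN1r; by move=> k; exact k.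
have k3 := ler_wpM2r e0 m1; have k4 := ler_wpM2r e0 m2.
have M0 : 0 <= M by apply: le_trans m1; exact: ltW.
have k5 : 0 <= M * e by apply: mulr_ge0.
lra.
Qed.


Lemma hoffman n (as_ : seq (vec n)) : exists K : R, 0 <= K /\
  forall cs : seq (vec n * R), (forall c, c \in cs -> c.1 \in as_) ->
  (forall e, 0 < e -> exists x, sat cs x e) ->
  forall (x0 : vec n) e, 0 <= e -> sat cs x0 e ->
  exists x, sat cs x 0 /\ forall i, `|x i 0 - x0 i 0| <= K * e.
Proof.
elim: n as_ => [|n IH] as_.
  exists 0; split => // cs _ Hf x0 e e0 Hx0; exists x0; split; last first.
    by move=> i; rewrite subrr normr0 mul0r.
  have d0 : forall c (y : vec 0), dot c y = 0 by move=> c y; rewrite /dot big_ord0.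
  move=> c hc; rewrite addr0 d0; apply/ler_addgt0Pr => eps eps0.
  have [y Hy] := Hf _ eps0; by have := Hy _ hc; rewrite d0.
have [K' [K'0 HK']] := IH (fm_as as_).
pose M := \sum_(a <- as_) `|hd a|^-1.
pose N := \sum_(a <- as_) \sum_i `|a i 0|.
have M0 : 0 <= M by apply: sumr_ge0 => a _; rewrite invr_ge0.
have N0 : 0 <= N by apply: sumr_ge0 => a _; apply: sumr_ge0.
have HM : forall a, a \in as_ -> `|hd a|^-1 <= M.
  move=> a ha; apply: (sum_mem_le (F := fun a => `|hd a|^-1)) => // y.
  by rewrite invr_ge0.
have HN : forall a, a \in as_ -> \sum_i `|tl a i 0| <= N.
  move=> a ha; apply: le_trans (tl_norm_le a) _.
  apply: (sum_mem_le (F := fun a : vec n.+1 => \sum_i `|a i 0|)) => // y; exact: sumr_ge0.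
pose D := (N * (K' * (2 * M + 1)) + 1) * M.
have M1 : 0 < 2 * M + 1 by lra.
have D0 : 0 <= D.
  apply: mulr_ge0 => //; apply: addr_ge0 => //; apply: mulr_ge0 => //.
  apply: mulr_ge0 => //; exact: ltW.
exists (K' * (2 * M + 1) + D); split.
  apply: addr_ge0 => //; apply: mulr_ge0 => //; exact: ltW.
move=> cs Hcs Hf x0 e e0 Hx0.
have HMc : forall c, c \in cs -> `|hd c.1|^-1 <= M by move=> c /Hcs; exact: HM.
have Hf' : forall e, 0 < e -> exists x, sat (fm_cs cs) x e.
  move=> e' e'0; have [x Hx] := Hf (e' / (2 * M + 1)) (divr_gt0 e'0 M1).
  exists (tl x); have := fm_sat (ltW (divr_gt0 e'0 M1)) HMc Hx.
  by rewrite mulrC divfK // gt_eqF.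
have E0 : 0 <= (2 * M + 1) * e by apply: mulr_ge0 => //; exact: ltW.
have [x1' [Hx1' Hd']] := HK' _ (fm_mem Hcs) Hf' (tl x0) _ E0 (fm_sat e0 HMc Hx0).
pose t0 := hd x0.
pose Us := [seq (c.2 - dot (tl c.1) x1') / hd c.1 | c <- cs & 0 < hd c.1].
pose Ls := [seq (dot (tl c.1) x1' - c.2) / (- hd c.1) | c <- cs & hd c.1 < 0].
pose mU := foldr Order.min t0 Us.
pose t1 := foldr Order.max mU Ls.
pose Q := N * (K' * ((2 * M + 1) * e)).
have Q0 : 0 <= Q by apply: mulr_ge0 => //; apply: mulr_ge0.
have HQ : forall c, c \in cs -> `|dot (tl c.1) x1' - dot (tl c.1) (tl x0)| <= Q.
  move=> c hc; rewrite -dotBr; apply: le_trans (@dot_abs_le _ _ _ (K' * ((2 * M + 1) * e)) _) _.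
    by move=> j; have := Hd' j; rewrite !mxE.
  apply: ler_wpM2r (HN _ (Hcs _ hc)); exact: mulr_ge0.
have DQ : D * e = (Q + e) * M by rewrite /D /Q; ring.
have LU : forall c d, c \in cs -> d \in cs -> 0 < hd c.1 -> hd d.1 < 0 ->
   (dot (tl d.1) x1' - d.2) / (- hd d.1) <= (c.2 - dot (tl c.1) x1') / hd c.1.
  move=> c d hc hd' hp hn; have := Hx1' _ (fm_mem1 hc hd' hp hn).
  rewrite /= dot_comb addr0.
  set ia := (hd c.1)^-1; set ib := (- hd d.1)^-1 => h.
  lra.
have Hfeas : sat cs (vcons t1 x1') 0.
  move=> c hc; rewrite dot_split hd_vcons tl_vcons addr0.
  case: (ltgtP (hd c.1) 0) => h.
  - have : (dot (tl c.1) x1' - c.2) / (- hd c.1) <= t1.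
      apply: fmax_ge; apply/mapP; exists c => //; by rewrite mem_filter h hc.
    rewrite ler_pdivrMr ?oppr_gt0 // => k; lra.
  - have : t1 <= (c.2 - dot (tl c.1) x1') / hd c.1.
      apply: fmax_le.
        apply: fmin_le; apply/mapP; exists c => //; by rewrite mem_filter h hc.
      move=> l /mapP [d]; rewrite mem_filter => /andP [hn hd'] ->; exact: LU.
    rewrite ler_pdivlMr // => k; lra.
  - have := Hx1' _ (fm_mem0 hc h); rewrite h mul0r add0r addr0 //.
have Hup : t1 <= t0 + D * e.
  apply: fmax_le.
    apply: le_trans (fmin_le0 _ _) _; rewrite lerDl; exact: mulr_ge0.
  move=> l /mapP [d]; rewrite mem_filter => /andP [hn hd'] ->.
  have h0 := Hx0 _ hd'; rewrite dot_split in h0.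
  have hq := HQ _ hd'; have hm := HMc _ hd'; rewrite ltr0_norm // in hm.
  set ib := (- hd d.1)^-1 in hm *.
  have ib0 : 0 < ib by rewrite invr_gt0 oppr_gt0.
  have ib1 : ib * (- hd d.1) = 1 by rewrite mulVf // oppr_eq0 lt_eqF.
  have ib1' : ib * hd d.1 = -1 by rewrite -ib1 mulrN opprK.
  have k4 : t0 * (ib * hd d.1) = - t0 by rewrite ib1' mulrN1.
  move: hq; rewrite ler_norml => /andP [_ hq].
  have k1 := ler_wpM2r (ltW ib0) hq.
  have k2 := ler_wpM2l Q0 hm.
  have k3 := ler_wpM2l e0 hm.
  have k5 : dot (tl d.1) (tl x0) - d.2 <= e - hd d.1 * t0 by rewrite /t0; lra.
  have k6 := ler_wpM2r (ltW ib0) k5.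
  rewrite DQ; nra.
have Hlo : t0 - D * e <= t1.
  apply: le_trans (fmax_ge0 _ _); apply: fmin_ge.
    rewrite lerBlDr lerDl; exact: mulr_ge0.
  move=> u /mapP [c]; rewrite mem_filter => /andP [hp hc] ->.
  have h0 := Hx0 _ hc; rewrite dot_split in h0.
  have hq := HQ _ hc; have hm := HMc _ hc; rewrite gtr0_norm // in hm.
  set ia := (hd c.1)^-1 in hm *.
  have ia0 : 0 < ia by rewrite invr_gt0.
  have ia1 : ia * hd c.1 = 1 by rewrite mulVf // gt_eqF.
  have k4 : t0 * (ia * hd c.1) = t0 by rewrite ia1 mulr1.
  move: hq; rewrite ler_norml => /andP [_ hq].
  have k1 := ler_wpM2r (ltW ia0) hq.
  have k2 := ler_wpM2l Q0 hm.
  have k3 := ler_wpM2l e0 hm.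
  have k5 : hd c.1 * t0 - e <= c.2 - dot (tl c.1) (tl x0) by rewrite /t0; lra.
  have k6 := ler_wpM2r (ltW ia0) k5.
  rewrite DQ; lra.
exists (vcons t1 x1'); split => // i.
case: (unliftP ord0 i) => [j ->|->].
  rewrite mxE liftK; have := Hd' j; rewrite mxE => h.
  apply: le_trans h _; have := mulr_ge0 D0 e0; lra.
rewrite mxE unlift_none ler_norml.
have -> : x0 ord0 0 = t0 by [].
have : 0 <= K' * (2 * M + 1) * e by apply: mulr_ge0 => //; apply: mulr_ge0 => //; exact: ltW.
rewrite mulrDl; lra.
Qed.

End Hoff.

Section Main.
Variable R : realType.
Local Notation vec n := 'cV[R]_n.

Definition sq2 p (v : vec p) : R := \sum_i (v i 0) ^+ 2.

Lemma sq2_ge0 p (v : vec p) : 0 <= sq2 v.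
Proof. apply: sumr_ge0 => i _; exact: sqr_ge0. Qed.

Lemma norm2_sq p (v : vec p) : norm2 v ^+ 2 = sq2 v.
Proof. by rewrite /norm2 sqr_sqrtr // sq2_ge0. Qed.

Lemma norm2_ge0 p (v : vec p) : 0 <= norm2 v.
Proof. exact: sqrtr_ge0. Qed.

Lemma abs_le_of_sq (a b : R) : 0 <= b -> a ^+ 2 <= b ^+ 2 -> `|a| <= b.
Proof.
move=> b0 h; rewrite -sqrtr_sqr -[b]ger0_norm // -sqrtr_sqr.
by rewrite ler_sqrt // sqr_ge0.
Qed.

Lemma entry_le_sq2 p (v : vec p) i : (v i 0) ^+ 2 <= sq2 v.
Proof.
rewrite /sq2 (bigD1 i) //= lerDl; apply: sumr_ge0 => j _; exact: sqr_ge0.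
Qed.

Lemma entry_le_norm2 p (v : vec p) i : `|v i 0| <= norm2 v.
Proof. apply: abs_le_of_sq; first exact: norm2_ge0. by rewrite norm2_sq entry_le_sq2. Qed.

Lemma norm2_le p (v : vec p) B : 0 <= B -> (forall i, `|v i 0| <= B) -> norm2 v <= p%:R * B.
Proof.
move=> B0 HB.
have h1 : sq2 v <= p%:R * B ^+ 2.
  rewrite /sq2; apply: le_trans (_ : \sum_(i < p) B ^+ 2 <= _).
    apply: ler_sum => i _; have := HB i; rewrite ler_norml => /andP [h1 h2].
    nra.
  by rewrite sumr_const card_ord mulr_natl.
have h2 : p%:R * B ^+ 2 <= (p%:R * B) ^+ 2.
  case: p v HB h1 => [|p] v HB h1; first by rewrite mulr0n !mul0r expr2 mul0r.
  have : 1 <= p.+1%:R :> R by rewrite ler1n.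
  nra.
rewrite /norm2 -[X in _ <= X]ger0_norm ?mulr_ge0 // -sqrtr_sqr ler_sqrt ?sqr_ge0 //.
exact: le_trans h1 h2.
Qed.


Variables (m n k : nat) (A : 'M[R]_(m, n)) (W : 'M[R]_(k, n)) (alpha : R).
Hypothesis halpha : 0 < alpha.

Local Notation F := (objective A W alpha).

Lemma obj_sq y x : F y x = sq2 (A *m x - y) + alpha * norm1 (W *m x).
Proof. by rewrite /objective norm2_sq. Qed.

Definition mid (x x' : vec n) : vec n := 2^-1 *: (x + x').

Lemma mulmx_mid p (B : 'M[R]_(p, n)) (x x' : vec n) (i : 'I_p) :
  (B *m mid x x') i 0 = 2^-1 * ((B *m x) i 0 + (B *m x') i 0).
Proof. by rewrite /mid -scalemxAr mulmxDr !mxE. Qed.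

Lemma mulmx_sub p (B : 'M[R]_(p, n)) (x x' : vec n) (i : 'I_p) :
  (B *m (x - x')) i 0 = (B *m x) i 0 - (B *m x') i 0.
Proof. by rewrite mulmxBr !mxE. Qed.

Lemma sub_entry p (u v : vec p) (i : 'I_p) : (u - v) i 0 = u i 0 - v i 0.
Proof. by rewrite !mxE. Qed.

Lemma mid_le y x x' :
  F y (mid x x') <= (F y x + F y x') / 2 - sq2 (A *m (x - x')) / 4.
Proof.
rewrite !obj_sq.
have e1 : sq2 (A *m mid x x' - y) =
   (sq2 (A *m x - y) + sq2 (A *m x' - y)) / 2 - sq2 (A *m (x - x')) / 4.
  rewrite /sq2 -big_split /= !mulr_suml -sumrB; apply: eq_bigr => i _.
  rewrite !sub_entry mulmx_mid mulmx_sub.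
  by field; rewrite ?pnatr_eq0.
have e2 : norm1 (W *m mid x x') <= (norm1 (W *m x) + norm1 (W *m x')) / 2.
  rewrite /norm1 -big_split /= mulr_suml; apply: ler_sum => i _.
  rewrite mulmx_mid normrM ger0_norm ?invr_ge0 // mulrC ler_wpM2r ?invr_ge0 //.
  exact: ler_normD.
have e3 := ler_wpM2l (ltW halpha) e2.
rewrite e1; lra.
Qed.


Lemma sq2_swap (x x' : vec n) : sq2 (A *m (x' - x)) = sq2 (A *m (x - x')).
Proof.
rewrite /sq2; apply: eq_bigr => i _; by rewrite !mulmx_sub -sqrrN opprB.
Qed.

Lemma key_ineq (y y' : vec m) (x x' : vec n) :
  sq2 (A *m x' - y) - sq2 (A *m x - y) + sq2 (A *m x - y') - sq2 (A *m x' - y')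
  <= sq2 (A *m (x - x')) / 2 + 2 * sq2 (y - y').
Proof.
rewrite /sq2 -sumrB -big_split /= -sumrB mulr_suml mulr_sumr -big_split /=.
apply: ler_sum => i _; rewrite !sub_entry mulmx_sub.
set a := (A *m x) i 0; set b := (A *m x') i 0.
set u := y i 0; set v := y' i 0.
rewrite -subr_ge0.
have -> : (a - b) ^+ 2 / 2 + 2 * (u - v) ^+ 2 -
  ((b - u) ^+ 2 - (a - u) ^+ 2 + (a - v) ^+ 2 - (b - v) ^+ 2) =
  ((a - b) - 2 * (u - v)) ^+ 2 / 2.
  by field; rewrite ?pnatr_eq0.
by apply: divr_ge0; [exact: sqr_ge0|].
Qed.

Lemma Alip (y y' : vec m) (x x' : vec n) :
  minimizers A W alpha y x -> minimizers A W alpha y' x' ->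
  sq2 (A *m (x - x')) <= 4 * sq2 (y - y').
Proof.
move=> Hx Hx'.
have h1 := Hx (mid x x'); have h2 := mid_le y x x'.
have h3 := Hx' (mid x' x); have h4 := mid_le y' x' x.
rewrite sq2_swap in h4.
have h5 := key_ineq y y' x x'.
move: h1 h2 h3 h4; rewrite !obj_sq; lra.
Qed.


Lemma dotNl p (a x : vec p) : dot (- a) x = - dot a x.
Proof. rewrite /dot -sumrN; apply: eq_bigr => i _; by rewrite mxE mulNr. Qed.

Definition rowv (i : 'I_m) : vec n := (row i A)^T.
Lemma dot_rowv i x : dot (rowv i) x = (A *m x) i 0.
Proof. rewrite /dot [RHS]mxE; apply: eq_bigr => j _; by rewrite !mxE. Qed.

Definition sgnv (s : {ffun 'I_k -> bool}) : vec k := \col_j (if s j then 1 else -1).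
Definition wv s : vec n := W^T *m sgnv s.
Lemma dot_wv s x : dot (wv s) x = \sum_j (sgnv s) j 0 * (W *m x) j 0.
Proof.
rewrite /dot.
under eq_bigr do rewrite mxE mulr_suml.
rewrite exchange_big /=; apply: eq_bigr => j _; rewrite [(W *m x) j 0]mxE mulr_sumr.
apply: eq_bigr => i _; rewrite !mxE; ring.
Qed.

Definition as_sys : seq (vec n) :=
  [seq rowv i | i <- enum 'I_m] ++ [seq - rowv i | i <- enum 'I_m] ++
  [seq wv s | s <- enum {ffun 'I_k -> bool}].
Definition cs_sys (p : vec m) (c : R) : seq (vec n * R) :=
  [seq (rowv i, p i 0) | i <- enum 'I_m] ++ [seq (- rowv i, - p i 0) | i <- enum 'I_m] ++
  [seq (wv s, c) | s <- enum {ffun 'I_k -> bool}].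

Lemma cs_in (p : vec m) (c : R) d : d \in cs_sys p c -> d.1 \in as_sys.
Proof.
rewrite /cs_sys !mem_cat => /or3P [] /mapP [i _ ->] /=.
- by apply/or3P; apply: Or31; apply/mapP; exists i; rewrite ?mem_enum.
- by apply/or3P; apply: Or32; apply/mapP; exists i; rewrite ?mem_enum.
- by apply/or3P; apply: Or33; apply/mapP; exists i; rewrite ?mem_enum.
Qed.

Lemma sat_sys_of (p : vec m) (c : R) (x : vec n) (e : R) : (forall i, `|(A *m x) i 0 - p i 0| <= e) ->
  norm1 (W *m x) <= c + e -> sat (cs_sys p c) x e.
Proof.
move=> h1 h2 d; rewrite /cs_sys !mem_cat => /or3P [] /mapP [i _ ->] /=.
- rewrite dot_rowv; have := h1 i; rewrite ler_norml; lra.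
- rewrite dotNl dot_rowv; have := h1 i; rewrite ler_norml; lra.
- rewrite dot_wv; apply: le_trans h2; apply: ler_sum => j _; rewrite mxE.
  case: (i j); rewrite ?mul1r ?mulN1r ?ler_norm // -normrN ler_norm //.
Qed.

Lemma sat_sys0 (p : vec m) (c : R) (x : vec n) : sat (cs_sys p c) x 0 -> A *m x = p /\ norm1 (W *m x) <= c.
Proof.
move=> H; split.
  apply/matrixP => i j; rewrite (ord1 j); apply/le_anti/andP; split.
    have := H (rowv i, p i 0); rewrite /= dot_rowv addr0; apply.
    by rewrite mem_cat map_f ?mem_enum.
  have := H (- rowv i, - p i 0); rewrite /= dotNl dot_rowv addr0 lerN2; apply.
  by rewrite mem_cat; apply/orP; right; rewrite mem_cat map_f ?mem_enum.
pose s := [ffun j => 0 <= (W *m x) j 0].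
have := H (wv s, c); rewrite /= dot_wv addr0.
have -> : \sum_j sgnv s j 0 * (W *m x) j 0 = norm1 (W *m x).
  apply: eq_bigr => j _; rewrite mxE ffunE; case: ifP => h.
    by rewrite mul1r ger0_norm.
  by rewrite mulN1r ltr0_norm // ltNge h.
apply; rewrite mem_cat; apply/orP; right; rewrite mem_cat; apply/orP; right.
by rewrite map_f ?mem_enum.
Qed.


Lemma norm1_ge0 p (v : vec p) : 0 <= norm1 v.
Proof. by apply: sumr_ge0 => i _. Qed.

Lemma norm1D p (u v : vec p) : norm1 (u + v) <= norm1 u + norm1 v.
Proof. rewrite /norm1 -big_split; apply: ler_sum => i _; rewrite mxE; exact: ler_normD. Qed.

Definition NW : R := \sum_j \sum_i `|W j i|.
Lemma NW_ge0 : 0 <= NW.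
Proof. by apply: sumr_ge0 => j _; apply: sumr_ge0. Qed.

Lemma norm1W_le (d : vec n) B : (forall i, `|d i 0| <= B) -> norm1 (W *m d) <= NW * B.
Proof.
move=> HB; rewrite /norm1 /NW mulr_suml; apply: ler_sum => j _.
rewrite mxE mulr_suml; apply: le_trans (ler_norm_sum _ _ _) _.
apply: ler_sum => i _; rewrite normrM; apply: ler_wpM2l => //.
Qed.

Lemma F_ge0 y x : 0 <= F y x.
Proof. rewrite obj_sq; apply: addr_ge0; [exact: sq2_ge0|apply: mulr_ge0; [exact: ltW|exact: norm1_ge0]]. Qed.

Lemma min_of (y : vec m) (x xs : vec n) : minimizers A W alpha y xs ->
  A *m x = A *m xs -> norm1 (W *m x) <= norm1 (W *m xs) -> minimizers A W alpha y x.
Proof.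
move=> H e1 e2 z; apply: le_trans (H z); rewrite !obj_sq e1 lerD2l.
by apply: ler_wpM2l => //; exact: ltW.
Qed.


Lemma exists_min (y : vec m) : exists x, minimizers A W alpha y x.
Proof.
pose E := range (F y).
have hlb : has_lbound E by exists 0 => _ [x _ <-]; exact: F_ge0.
have hinf : has_inf E by split => //; exists (F y 0), 0.
pose mm := inf E.
have hm1 : forall z, mm <= F y z by move=> z; apply: (ge_inf hlb); exists z.
have hm2 : forall eps, 0 < eps -> exists x, F y x < mm + eps.
  move=> eps eps0; have [r [x _ <-] h] := inf_adherent eps0 hinf; by exists x.
pose Sub (d : R) x := F y x <= mm + d ^+ 2.
have close : forall d d' x x', 0 < d -> 0 < d' -> Sub d x -> Sub d' x' ->
    forall i, `|(A *m x) i 0 - (A *m x') i 0| <= 2 * (d + d').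
  move=> d d' x x' d0 d'0 hx hx' i.
  have h1 := hm1 (mid x x'); have h2 := mid_le y x x'.
  have h3 := entry_le_sq2 (A *m (x - x')) i.
  rewrite mulmx_sub in h3.
  apply: abs_le_of_sq; first by apply: mulr_ge0 => //; apply: addr_ge0; exact: ltW.
  move: hx hx' h1 h2 h3; rewrite /Sub => hx hx' h1 h2 h3.
  set v := (A *m x) i 0 - (A *m x') i 0 in h3 *.
  set S := sq2 (A *m (x - x')) in h2 h3.
  have hS : S <= 2 * (d ^+ 2 + d' ^+ 2) by lra.
  nra.
have [x1 hx1] := hm2 1 ltr01.
have Sx1 : Sub 1 x1 by rewrite /Sub expr1n ltW.
pose Si (i : 'I_m) := [set r : R | exists (x : vec n) (d : R), 0 < d /\ Sub d x /\ r = (A *m x) i 0 - 2 * d]%classic.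
have hbound : forall i d x, 0 < d -> Sub d x ->
    (A *m x) i 0 - 2 * d <= sup (Si i) <= (A *m x) i 0 + 2 * d.
  move=> i d x d0 hx.
  have ne : (Si i !=set0)%classic by exists ((A *m x1) i 0 - 2 * 1), x1, 1; split => //; split.
  have hs : has_sup (Si i).
    split => //; exists ((A *m x1) i 0 + 2) => r [x' [d' [d'0 [hx' ->]]]].
    have := close _ _ _ _ d'0 ltr01 hx' Sx1 i; rewrite ler_norml; lra.
  apply/andP; split.
    by apply: sup_upper_bound => //; exists x, d; split => //; split.
  apply: ge_sup => // r [x' [d' [d'0 [hx' ->]]]].
  have := close _ _ _ _ d'0 d0 hx' hx i; rewrite ler_norml; lra.
pose pstar : vec m := \col_i sup (Si i).
have hp : forall d x, 0 < d -> Sub d x -> forall i, `|(A *m x) i 0 - pstar i 0| <= 2 * d.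
  move=> d x d0 hx i; rewrite [pstar i 0]mxE; have := hbound i d x d0 hx.
  rewrite ler_norml => /andP [h1 h2]; apply/andP; split; lra.
pose s0 := sq2 (pstar - y).
pose cstar := (mm - s0) / alpha.
have hc : alpha * cstar = mm - s0 by rewrite /cstar mulrC divfK // gt_eqF.
pose Q := \sum_i (4 * `|pstar i 0 - y i 0| + 4).
have Q0 : 0 <= Q by apply: sumr_ge0 => i _; apply: addr_ge0 => //; apply: mulr_ge0.
have approx : forall e, 0 < e -> exists x, sat (cs_sys pstar cstar) x e.
  move=> e e0.
  pose G := 2 + (1 + Q) / alpha.
  have G0 : 2 <= G by rewrite /G lerDl; apply: divr_ge0 => //; [lra|exact: ltW].
  pose d := Order.min 1 (e / G).
  have d0 : 0 < d by rewrite lt_min ltr01 divr_gt0 //; lra.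
  have d1 : d <= 1 by rewrite ge_min lexx.
  have dG : d * G <= e.
    have : d <= e / G by rewrite ge_min lexx orbT.
    by rewrite ler_pdivlMr //; lra.
  have [x hx] := hm2 (d ^+ 2) (exprn_gt0 _ d0).
  have Sx : Sub d x by rewrite /Sub ltW.
  exists x; apply: sat_sys_of.
    move=> i; apply: le_trans (hp _ _ d0 Sx i) _.
    move: dG; rewrite /G; have : 0 <= d * ((1 + Q) / alpha).
      by apply: mulr_ge0; [exact: ltW|apply: divr_ge0; [lra|exact: ltW]].
    lra.
  have hq : s0 - sq2 (A *m x - y) <= d * Q.
    rewrite /s0 /sq2 -sumrB /Q mulr_sumr; apply: ler_sum => i _.
    rewrite !sub_entry; have := hp _ _ d0 Sx i.
    set a := (A *m x) i 0; set q := pstar i 0 - y i 0.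
    have -> : a - y i 0 = q + (a - pstar i 0) by rewrite /q; ring.
    set w := a - pstar i 0 => hw.
    have hqw : - (q * w) <= `|q| * `|w|.
      by rewrite -normrM -normrN ler_norm.
    have := normr_ge0 q; have := normr_ge0 w; nra.
  have hd2 : d ^+ 2 <= d by nra.
  rewrite -(ler_pM2l halpha) mulrDr hc.
  move: hx; rewrite obj_sq => hx.
  have key : alpha * (d * G) = 2 * (alpha * d) + d * (1 + Q).
    by rewrite /G; field; rewrite gt_eqF.
  have : alpha * (d * G) <= alpha * e by rewrite ler_pM2l.
  have : 0 <= alpha * d by apply: mulr_ge0; exact: ltW.
  rewrite key; lra.
have [K [K0 HK]] := hoffman as_sys.
have [x0 hx0] := approx 1 ltr01.
have [x [hx _]] := HK _ (@cs_in pstar cstar) approx x0 1 ler01 hx0.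
have [e1 e2] := sat_sys0 hx.
exists x => z; apply: le_trans (hm1 z); rewrite obj_sq e1 -/s0.
have := ler_wpM2l (ltW halpha) e2; rewrite hc; lra.
Qed.


Lemma norm2Z p c (v : vec p) : norm2 (c *: v) = `|c| * norm2 v.
Proof.
rewrite /norm2 -sqrtr_sqr -sqrtrM ?sqr_ge0 // mulr_sumr.
congr (Num.sqrt _); apply: eq_bigr => i _; by rewrite mxE exprMn.
Qed.

Lemma sq2N p (u v : vec p) : sq2 (u - v) = sq2 (v - u).
Proof. rewrite /sq2; apply: eq_bigr => i _; by rewrite !sub_entry -sqrrN opprB. Qed.

Lemma main_lip : exists kappa : R, 0 < kappa /\
    forall (y yt : 'cV[R]_m) (xt : 'cV[R]_n),
      minimizers A W alpha yt xt ->
      exists (x b : 'cV[R]_n),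
        minimizers A W alpha y x /\ norm2 b <= 1 /\
        xt = x + (kappa * norm2 (y - yt)) *: b.
Proof.
have [K [K0 HK]] := hoffman as_sys.
have NW0 := NW_ge0.
pose kappa := n%:R * (K * (2 * (1 + NW * K))) + 1.
have kpos : 0 < kappa.
  rewrite /kappa ltr_pwDr // mulr_ge0 // mulr_ge0 // mulr_ge0 //.
  by apply: addr_ge0 => //; apply: mulr_ge0.
exists kappa; split => // y yt xt hxt.
pose dl := norm2 (y - yt).
have dl0 : 0 <= dl := norm2_ge0 _.
have [xs hxs] := exists_min y.
pose d := xt - xs.
have hAd : forall i, `|(A *m d) i 0| <= 2 * dl.
  move=> i; have := Alip hxt hxs; rewrite sq2N -[sq2 (y - yt)]norm2_sq -/dl => h.
  apply: abs_le_of_sq; first by apply: mulr_ge0.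
  have h2 := entry_le_sq2 (A *m d) i.
  have e4 : (2 * dl) ^+ 2 = 4 * dl ^+ 2 by rewrite exprMn; congr (_ * _); rewrite expr2 -natrM.
  rewrite e4; exact: (le_trans h2 h).
have feasd : forall e, 0 < e -> exists x, sat (cs_sys (A *m d) (norm1 (W *m d))) x e.
  move=> e e0; exists d; apply: sat_sys_of.
    by move=> i; rewrite subrr normr0 ltW.
  by rewrite lerDl ltW.
have sat0 : sat (cs_sys (A *m d) (norm1 (W *m d))) 0 (2 * dl).
  apply: sat_sys_of.
    by move=> i; rewrite mulmx0 mxE sub0r normrN.
  rewrite mulmx0; have -> : norm1 (0 : vec k) = 0.
    by rewrite /norm1 big1 // => i _; rewrite mxE normr0.
  by apply: addr_ge0; [exact: norm1_ge0|apply: mulr_ge0].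
have [d' [hd' Hd']] := HK _ (@cs_in (A *m d) (norm1 (W *m d))) feasd 0 (2 * dl)
  (mulr_ge0 (ler0n R 2) dl0) sat0.
have [eA _] := sat_sys0 hd'.
have Hd'' : forall i, `|d' i 0| <= K * (2 * dl).
  by move=> i; have := Hd' i; rewrite mxE subr0.
have hW : norm1 (W *m xt) <= norm1 (W *m xs) + NW * (K * (2 * dl)).
  have := hxt (xs + d'); rewrite !obj_sq.
  have -> : A *m (xs + d') = A *m xt.
    by rewrite mulmxDr eA /d mulmxBr addrC subrK.
  rewrite lerD2l ler_pM2l // mulmxDr => h.
  apply: le_trans h _; apply: le_trans (norm1D _ _) _; rewrite lerD2l.
  exact: norm1W_le.
pose e := 2 * dl * (1 + NW * K).
have e0 : 0 <= e by apply: mulr_ge0; [apply: mulr_ge0|apply: addr_ge0 => //; apply: mulr_ge0].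
have sat_xt : sat (cs_sys (A *m xs) (norm1 (W *m xs))) xt e.
  apply: sat_sys_of.
    move=> i; rewrite -mulmx_sub; apply: le_trans (hAd i) _.
    rewrite /e mulrDr mulr1 lerDl; apply: mulr_ge0; [apply: mulr_ge0|apply: mulr_ge0] => //.
  apply: le_trans hW _; rewrite lerD2l /e.
  have : 0 <= 2 * dl by apply: mulr_ge0.
  have : 0 <= NW * (K * (2 * dl)) by apply: mulr_ge0 => //; apply: mulr_ge0 => //; apply: mulr_ge0.
  have -> : 2 * dl * (1 + NW * K) = 2 * dl + NW * (K * (2 * dl)) by ring.
  lra.
have feasxs : forall e, 0 < e -> exists x, sat (cs_sys (A *m xs) (norm1 (W *m xs))) x e.
  move=> e' e'0; exists xs; apply: sat_sys_of.
    by move=> i; rewrite subrr normr0 ltW.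
  by rewrite lerDl ltW.
have [x [hx Hx]] := HK _ (@cs_in (A *m xs) (norm1 (W *m xs))) feasxs xt e e0 sat_xt.
have [ex1 ex2] := sat_sys0 hx.
have hmin := min_of hxs ex1 ex2.
have hb : norm2 (xt - x) <= kappa * dl.
  have KE : 0 <= K * e by apply: mulr_ge0.
  apply: le_trans (norm2_le KE _) _.
    by move=> i; rewrite sub_entry distrC.
  have -> : n%:R * (K * e) = n%:R * (K * (2 * (1 + NW * K))) * dl by rewrite /e; ring.
  apply: ler_wpM2r => //; rewrite -[kappa]/(n%:R * (K * (2 * (1 + NW * K))) + 1) lerDl //.
case: (eqVneq (kappa * dl) 0) => hkd.
  exists x, 0; split => //; split; first by rewrite /norm2 big1 ?sqrtr0 // => i _; rewrite mxE expr0n.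
  rewrite scaler0 addr0; apply/matrixP => i j; rewrite (ord1 j).
  have := entry_le_norm2 (xt - x) i; rewrite sub_entry => h.
  have : `|xt i 0 - x i 0| <= 0 by apply: le_trans h _; rewrite -hkd.
  by rewrite normr_le0 subr_eq0 => /eqP.
have kd0 : 0 < kappa * dl by rewrite lt_def hkd mulr_ge0 // ltW.
exists x, ((kappa * dl)^-1 *: (xt - x)); split => //; split.
  rewrite norm2Z ger0_norm; last by rewrite invr_ge0 ltW.
  by rewrite mulrC ler_pdivrMr // mul1r.
by rewrite scalerA mulfV // scale1r addrC subrK.
Qed.


End Main.

Unset Implicit Arguments.

Theorem proposition1 (R : realType) (m n k : nat) (A : 'M[R]_(m, n))
  (W : 'M[R]_(k, n)) (alpha : R) (halpha : 0 < alpha) :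
  exists kappa : R, 0 < kappa /\
    forall (y yt : 'cV[R]_m) (xt : 'cV[R]_n),
      minimizers A W alpha yt xt ->
      exists (x b : 'cV[R]_n),
        minimizers A W alpha y x /\ norm2 b <= 1 /\
        xt = x + (kappa * norm2 (y - yt)) *: b.
Proof.
exact: (@main_lip R m n k A W alpha halpha).
Qed.
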